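(* Let $E/\mathbb{Q}$ be the elliptic curve $y^2=x^3+a_4x+a_6$ with $a_4,a_6\in\mathbb{Z}$. Suppose $(u,v)\in\mathbb{Z}^2$ is map-suitable for $E$ and $-D_E(u,v)$ is a negative fundamental discriminant. Then: (1) $v$ is square-free and $\gcd(u,v)=1$. (2) If $P\in E(\mathbb{Q})$ is not the point at infinity $\mathcal{O}$, there exist $A,B,C\in\mathbb{Z}$ with $\gcd(A,C)=\gcd(B,C)=1$ and $C>0$ such that $P=(A/C^2,B/C^3)$; putting $a=Av+C^2u$ and $g=\gcd(C,v)$, there exists an integer $\mu$ with $\frac{C^3}{g^2}\mu\equiv1\pmod{\frac{va}{g^2}}$. (3) For any such $\mu$, the form $$\frac{va}{g^2}x^2+2\mu\frac{Bv^2}{g^2}xy+\frac{\mu^2\frac{B^2v^4}{g^4}+d_E(u,v)}{\frac{va}{g^2}}y^2$$ is a positive definite binary quadratic form with integer coefficients and discriminant $-D_E(u,v)$.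
   Context: For integers $u,v$ put $d_E(u,v):=v(u^3+a_4uv^2-a_6v^3)$ and $D_E(u,v):=4d_E(u,v)$. A pair $(u,v)\in\mathbb{Z}^2$ is map-suitable for $E$ if $u$, $v$, $3u^2+a_4v^2$ and $D_E(u,v)$ are all positive. *)

(* Defs.v *)
From mathcomp Require Import all_boot all_order all_algebra.
Set Implicit Arguments. Unset Strict Implicit. Unset Printing Implicit Defensive.
Import Order.TTheory GRing.Theory Num.Theory.
Local Open Scope ring_scope.

Definition dE (a4 a6 u v : int) : int := v * (u ^+ 3 + a4 * u * v ^+ 2 - a6 * v ^+ 3).
Definition DE (a4 a6 u v : int) : int := 4 * dE a4 a6 u v.

Definition map_suitable (a4 a6 u v : int) : Prop :=
  [/\ 0 < u, 0 < v, 0 < 3 * u ^+ 2 + a4 * v ^+ 2 & 0 < DE a4 a6 u v].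

(* n is square-free: no square d^2 with |d| > 1 divides n (so 0 is not square-free) *)
Definition squarefree_int (n : int) : Prop :=
  forall d : int, (d * d %| n)%Z -> `|d| = 1.

Definition fundamental_discriminant (D : int) : Prop :=
  ((D %% 4)%Z = 1 /\ squarefree_int D) \/
  (exists m : int, D = 4 * m /\ ((m %% 4)%Z = 2 \/ (m %% 4)%Z = 3) /\ squarefree_int m).

Definition nonsingular (a4 a6 : int) : Prop := 4 * a4 ^+ 3 + 27 * a6 ^+ 2 != 0.

(* affine rational point (x,y) of E, i.e. a point of E(Q) other than O *)
Definition on_curve (a4 a6 : int) (x y : rat) : Prop :=
  y ^+ 2 = x ^+ 3 + a4%:~R * x + a6%:~R.

Definition pos_def_form (a b c : int) : Prop :=
  forall x y : int, (x, y) != (0, 0) -> 0 < a * x ^+ 2 + b * x * y + c * y ^+ 2.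

(* Main.v *)
Require Import Defs.
From mathcomp Require Import all_boot all_order all_algebra.
From mathcomp Require Import zify ring lra.
Import Order.TTheory GRing.Theory Num.Theory.
Local Open Scope ring_scope.

Lemma cop_dvd (m n m' n' : int) :
  (m' %| m)%Z -> (n' %| n)%Z -> coprimez m n -> coprimez m' n'.
Proof.
rewrite !coprimezE /dvdz => h1 h2 hc.
exact: (coprime_dvdl h1 (coprime_dvdr h2 hc)).
Qed.

Lemma dvdzNr (d m : int) : (d %| - m)%Z = (d %| m)%Z.
Proof. by rewrite !dvdzE abszN. Qed.

Lemma gcdz_ge0 (m n : int) : 0 <= gcdz m n.
Proof. by []. Qed.

Lemma sqf_cop (v x y : int) : squarefree_int v -> v = x * y -> coprimez x y.
Proof.
move=> hs hv; rewrite /coprimez; apply/eqP.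
have h1 := dvdz_gcdl x y; have h2 := dvdz_gcdr x y.
have : (gcdz x y * gcdz x y %| v)%Z.
  move: h1 h2; set g := gcdz x y => h1 h2; clearbody g.
  case/dvdzP: h1 => a ha; case/dvdzP: h2 => b hb.
  apply/dvdzP; exists (a * b). rewrite hv ha hb; ring.
move/hs. have := gcdz_ge0 x y. move: (gcdz x y) => h h0.
by rewrite ger0_norm.
Qed.

Lemma part1 (a4 a6 u v : int) :
  fundamental_discriminant (- DE a4 a6 u v) ->
  squarefree_int (dE a4 a6 u v).
Proof.
rewrite /fundamental_discriminant /DE; case.
  case=> h _; move: h; rewrite -mulrN mulrC modzMl //.
case=> m [hm [_ hs]] k hk; apply: hs.
have -> : m = - dE a4 a6 u v by lia.
by rewrite dvdzNr.
Qed.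

Lemma part1b (a4 a6 u v : int) :
  squarefree_int (dE a4 a6 u v) -> squarefree_int v /\ gcdz u v = 1.
Proof.
move=> hs; split.
  move=> k hk; apply: hs; rewrite /dE; exact: dvdz_mulr.
have h1 := dvdz_gcdl u v; have h2 := dvdz_gcdr u v.
have : (gcdz u v * gcdz u v %| dE a4 a6 u v)%Z.
  move: h1 h2; set g := gcdz u v => h1 h2; clearbody g.
  case/dvdzP: h1 => a ha; case/dvdzP: h2 => b hb.
  apply/dvdzP; exists (b * g ^+ 2 * (a ^+ 3 + a4 * a * b ^+ 2 - a6 * b ^+ 3)).
  rewrite /dE ha hb. ring.
move/hs. have := gcdz_ge0 u v. move: (gcdz u v) => h h0.
by rewrite ger0_norm.
Qed.

Lemma apos (a4 a6 u v A B C : int) : 0 < u -> 0 < v -> 0 < 3 * u ^+ 2 + a4 * v ^+ 2 ->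
  0 < dE a4 a6 u v -> 0 < C -> B ^+ 2 = A ^+ 3 + a4 * A * C ^+ 4 + a6 * C ^+ 6 ->
  0 < A * v + C ^+ 2 * u.
Proof.
move=> hu hv h3 hd hC hB; rewrite ltNge; apply/negP => hle.
pose X := A * v; pose U := - (C ^+ 2 * u).
pose F (t : int) := t ^+ 3 + a4 * v ^+ 2 * C ^+ 4 * t + a6 * v ^+ 3 * C ^+ 6.
have eX : F X = v ^+ 3 * B ^+ 2 by rewrite /F /X hB; ring.
have eU : v * F U = - (C ^+ 6 * dE a4 a6 u v) by rewrite /F /U /dE; ring.
have eD : F X - F U = (X - U) * ((X - U) * (X + 2 * U) + C ^+ 4 * (3 * u ^+ 2 + a4 * v ^+ 2)).
  by rewrite /F /U; ring.
have hXU : X - U <= 0 by rewrite /X /U; lra.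
have hU : U < 0 by rewrite /U oppr_lt0; apply: mulr_gt0 => //; apply: exprn_gt0.
have hX2 : X + 2 * U < 0 by lra.
have hC4 : 0 < C ^+ 4 * (3 * u ^+ 2 + a4 * v ^+ 2) by apply: mulr_gt0 => //; apply: exprn_gt0.
have hprod : 0 <= (X - U) * (X + 2 * U) by nra.
have hFU : F U < 0.
  have : v * F U < 0 by rewrite eU oppr_lt0; apply: mulr_gt0 => //; apply: exprn_gt0.
  by rewrite pmulr_rlt0.
have hFX : 0 <= F X by rewrite eX; apply: mulr_ge0; [apply: exprn_ge0; lra | apply: sqr_ge0].
have : F X - F U <= 0 by rewrite eD; nra.
lra.
Qed.

Lemma ratdec (a4 a6 : int) (x y : rat) : on_curve a4 a6 x y ->
  exists A B C : int, [/\ coprimez A C, coprimez B C, 0 < C,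
    x = A%:~R / (C%:~R) ^+ 2 & y = B%:~R / (C%:~R) ^+ 3] /\
    B ^+ 2 = A ^+ 3 + a4 * A * C ^+ 4 + a6 * C ^+ 6.
Proof.
rewrite /on_curve => hy.
have ex := numqE x; have ey := numqE y.
have hq := denq_gt0 x; have hs := denq_gt0 y.
have cpq : coprimez (numq x) (denq x) by rewrite coprimezE coprime_num_den.
have crs : coprimez (numq y) (denq y) by rewrite coprimezE coprime_num_den.
have dx := divq_num_den x; have dy := divq_num_den y.
move: ex ey hq hs cpq crs dx dy.
move: (numq x) (denq x) (numq y) (denq y) => p q r s ex ey hq hs cpq crs dx dy.
have E : ((r ^+ 2 * q ^+ 3 : int)%:~R : rat) =
         (s ^+ 2 * (p ^+ 3 + a4 * p * q ^+ 2 + a6 * q ^+ 3) : int)%:~R.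
  rewrite !(rmorphM, rmorphD, rmorphXn) /= ex ey.
  rewrite exprMn hy; ring.
have {}E := intr_inj E.
set K := p ^+ 3 + a4 * p * q ^+ 2 + a6 * q ^+ 3 in E.
have cqK : coprimez (q ^+ 3) K.
  rewrite coprimez_pexpl //.
  have -> : K = (a4 * p * q + a6 * q ^+ 2) * q + p ^+ 3 by rewrite /K; ring.
  rewrite /coprimez gcdzMDl -/(coprimez _ _) coprimez_pexpr //.
  by rewrite coprimez_sym.
have d1 : (q ^+ 3 %| s ^+ 2)%Z.
  rewrite -(Gauss_dvdzl _ cqK) -E; exact: dvdz_mull.
have d2 : (s ^+ 2 %| q ^+ 3)%Z.
  have csr : coprimez (s ^+ 2) (r ^+ 2) by rewrite coprimez_pexpl // coprimez_pexpr // coprimez_sym.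
  rewrite -(Gauss_dvdzr _ csr) E; exact: dvdz_mulr.
have e2 : s ^+ 2 = q ^+ 3.
  move: d1 d2; rewrite !dvdzE => d1 d2.
  have g1 : 0 < s ^+ 2 by apply: exprn_gt0; lra.
  have g2 : 0 < q ^+ 3 by apply: exprn_gt0; lra.
  move: d1 d2 g1 g2; move: (s ^+ 2) (q ^+ 3) => S Q d1 d2 g1 g2.
  have h1 := dvdn_leq (_ : (0 < `|S|)%N) d1.
  have h2 := dvdn_leq (_ : (0 < `|Q|)%N) d2.
  have := h1 ltac:(lia); have := h2 ltac:(lia). lia.
have : (q %| s)%Z.
  rewrite -(dvdz_pexp2r _ _ (_ : (0 < 2)%N)) //.
  have -> : s ^+ 2 = q ^+ 2 * q by rewrite e2; ring.
  exact: dvdz_mulr.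
case/dvdzP => C hsC.
have hqC : q = C ^+ 2.
  have : (C ^+ 2 - q) * q ^+ 2 = 0 by rewrite mulrBl -exprMn -hsC e2; ring.
  move/eqP; rewrite mulf_eq0 expf_eq0 /= => /orP[/eqP|/eqP]; lia.
have hC : 0 < C by nra.
have hsC3 : s = C ^+ 3 by rewrite hsC hqC; ring.
exists p, r, C; split; [split|] => //.
- by move: cpq; rewrite hqC coprimez_pexpr.
- by move: crs; rewrite hsC3 coprimez_pexpr.
- by rewrite -dx hqC rmorphXn.
- by rewrite -dy hsC3 rmorphXn.
- have C6 : C ^+ 6 != 0 by rewrite expf_eq0 /=; lia.
  apply: (mulIf C6); move: E; rewrite /K hqC hsC3 => E'.
  (have -> : r ^+ 2 * C ^+ 6 = r ^+ 2 * (C ^+ 2) ^+ 3 by ring); rewrite E'; ring.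
Qed.

Lemma core (a4 a6 u v A B C : int) :
  0 < v -> squarefree_int v -> 0 < dE a4 a6 u v -> coprimez A C -> 0 < C ->
  B ^+ 2 = A ^+ 3 + a4 * A * C ^+ 4 + a6 * C ^+ 6 ->
  0 < A * v + C ^+ 2 * u ->
      let a := A * v + C ^+ 2 * u in
      let g := gcdz C v in
      [/\ (g ^+ 2 %| C ^+ 3)%Z, (g ^+ 2 %| v * a)%Z,
          (exists mu : int,
             ((C ^+ 3 %/ g ^+ 2)%Z * mu == 1 %[mod (v * a %/ g ^+ 2)%Z])%Z) &
          (forall mu : int,
             ((C ^+ 3 %/ g ^+ 2)%Z * mu == 1 %[mod (v * a %/ g ^+ 2)%Z])%Z ->
             let fa := (v * a %/ g ^+ 2)%Z in
             let fb := 2 * mu * (B * v ^+ 2 %/ g ^+ 2)%Z in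
             let N := mu ^+ 2 * (B ^+ 2 * v ^+ 4 %/ g ^+ 4)%Z + dE a4 a6 u v in
             [/\ (g ^+ 2 %| B * v ^+ 2)%Z, (g ^+ 4 %| B ^+ 2 * v ^+ 4)%Z,
                 (fa %| N)%Z,
                 pos_def_form fa fb (N %/ fa)%Z &
                 fb ^+ 2 - 4 * fa * (N %/ fa)%Z = - DE a4 a6 u v])].
Proof.
move=> hv hsq hd hAC hC hB ha a g.
have hgC : (g %| C)%Z := dvdz_gcdl C v.
have hgv : (g %| v)%Z := dvdz_gcdr C v.
have cAg : coprimez A g by apply: cop_dvd hAC.
case/dvdzP: hgC => C1 eC; case/dvdzP: hgv => v1 ev.
have hg : 0 < g.
  have : g != 0 by apply/eqP => g0; move: hv; rewrite ev g0 mulr0.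
  have := gcdz_ge0 C v; rewrite -/g; lia.
have cAC1 : coprimez A C1 by apply: cop_dvd hAC => //; rewrite eC dvdz_mulr.
have cv1g : coprimez v1 g by apply: (@sqf_cop v v1 g hsq); rewrite ev.
have cv1C1 : coprimez v1 C1.
  rewrite /coprimez; apply/eqP.
  have h1 := dvdz_gcdl v1 C1; have h2 := dvdz_gcdr v1 C1.
  have h3 : (gcdz v1 C1 %| g)%Z.
    rewrite /g dvdz_gcd; apply/andP; split.
      by rewrite eC; apply: dvdz_mulr.
    by rewrite ev; apply: dvdz_mulr.
  have : (gcdz v1 C1 * gcdz v1 C1 %| v)%Z.
    by rewrite ev; apply: dvdz_mul.
  move/hsq. have := gcdz_ge0 v1 C1. move: (gcdz v1 C1) => h h0.
  by rewrite ger0_norm.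
have ea : a = A * v + C ^+ 2 * u by [].
clearbody a g. subst C v a.
set a1 := A * v1 + g * C1 ^+ 2 * u.
have g2 : g ^+ 2 != 0 by rewrite expf_eq0 /=; lia.
have g4 : g ^+ 4 != 0 by rewrite expf_eq0 /=; lia.
have e1 : ((C1 * g) ^+ 3 %/ g ^+ 2)%Z = g * C1 ^+ 3.
  by rewrite -(mulzK (g * C1 ^+ 3) g2); congr (_ %/ _)%Z; ring.
have e2 : (v1 * g * (A * (v1 * g) + (C1 * g) ^+ 2 * u) %/ g ^+ 2)%Z = v1 * a1.
  by rewrite -(mulzK (v1 * a1) g2); congr (_ %/ _)%Z; rewrite /a1; ring.
have e3 : (B * (v1 * g) ^+ 2 %/ g ^+ 2)%Z = B * v1 ^+ 2.
  by rewrite -(mulzK (B * v1 ^+ 2) g2); congr (_ %/ _)%Z; ring.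
have e4 : (B ^+ 2 * (v1 * g) ^+ 4 %/ g ^+ 4)%Z = B ^+ 2 * v1 ^+ 4.
  by rewrite -(mulzK (B ^+ 2 * v1 ^+ 4) g4); congr (_ %/ _)%Z; ring.
rewrite e1 e2.
have hv1 : 0 < v1 by nra.
have ha1 : 0 < a1 by move: ha; rewrite /a1; nra.
have cga1 : coprimez g a1.
  have -> : a1 = (C1 ^+ 2 * u) * g + A * v1 by rewrite /a1; ring.
  rewrite /coprimez gcdzMDl -/(coprimez _ _) coprimezMr.
  by rewrite !(coprimez_sym g) cAg cv1g.
have cC1a1 : coprimez C1 a1.
  have -> : a1 = (g * C1 * u) * C1 + A * v1 by rewrite /a1; ring.
  rewrite /coprimez gcdzMDl -/(coprimez _ _) coprimezMr.
  by rewrite !(coprimez_sym C1) cAC1 cv1C1.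
have cop : coprimez (g * C1 ^+ 3) (v1 * a1).
  rewrite coprimezMl coprimez_pexpl // !coprimezMr cga1 cC1a1.
  by rewrite !(coprimez_sym _ v1) cv1g cv1C1.
split.
- by apply/dvdzP; exists (g * C1 ^+ 3); ring.
- by apply/dvdzP; exists (v1 * a1); rewrite /a1; ring.
- case/coprimezP: cop => [[m n]] /= hmn; exists m.
  rewrite eqz_mod_dvd; apply/dvdzP; exists (- n).
  by rewrite -hmn; ring.
move=> mu; rewrite e3 e4 eqz_mod_dvd => /dvdzP [t ht].
set M := v1 * a1. set d := dE a4 a6 u (v1 * g).
set gam := g * C1 ^+ 3.
set K' := (A * v1) ^+ 2 - (A * v1) * (g * C1 ^+ 2 * u) + (g * C1 ^+ 2 * u) ^+ 2
          + a4 * v1 ^+ 2 * g ^+ 4 * C1 ^+ 4.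
have hN : mu ^+ 2 * (B ^+ 2 * v1 ^+ 4) + d = M * (mu ^+ 2 * K' - d * t * (1 + gam * mu)).
  have -> : M * (mu ^+ 2 * K' - d * t * (1 + gam * mu)) =
            M * (mu ^+ 2 * K') - d * (t * M) * (1 + gam * mu) by ring.
  rewrite -ht hB /M /d /dE /gam /K' /a1; ring.
set c := mu ^+ 2 * K' - d * t * (1 + gam * mu).
have hM : 0 < M by rewrite /M; nra.
have hM0 : M != 0 by lia.
cbv zeta; rewrite hN -/c mulKz //.
have disc : (2 * mu * (B * v1 ^+ 2)) ^+ 2 - 4 * M * c = - DE a4 a6 u (v1 * g).
  have -> : 4 * M * c = 4 * (M * c) by ring.
  rewrite -hN /DE -/d; ring.
split => //.
- by apply/dvdzP; exists (B * v1 ^+ 2); ring.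
- by apply/dvdzP; exists (B ^+ 2 * v1 ^+ 4); ring.
- exact: dvdz_mulr.
move=> x y hxy.
set fb := 2 * mu * (B * v1 ^+ 2) in disc *.
have id : 4 * M * (M * x ^+ 2 + fb * x * y + c * y ^+ 2) =
          (2 * M * x + fb * y) ^+ 2 - (fb ^+ 2 - 4 * M * c) * y ^+ 2 by ring.
rewrite disc /DE -/d mulNr opprK in id.
have h4M : 0 < 4 * M by lra.
rewrite -(pmulr_rgt0 _ h4M) id.
have [y0|y0] := eqVneq y 0.
  have x0 : x != 0 by move: hxy; rewrite y0 xpair_eqE andbT.
  rewrite y0 mulr0 addr0 expr0n /= mulr0 addr0 exprn_even_gt0 //.
  by rewrite !mulf_neq0 //; lia.
have hy2 : 0 < y ^+ 2 by rewrite exprn_even_gt0 //.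
have s1 : 0 <= (2 * M * x + fb * y) ^+ 2 by apply: sqr_ge0.
have s2 : 0 < 4 * d * y ^+ 2 by apply: mulr_gt0 => //; apply: mulr_gt0.
lra.
Qed.
Theorem lemma2p2 (a4 a6 u v : int) :
  nonsingular a4 a6 ->
  map_suitable a4 a6 u v ->
  - DE a4 a6 u v < 0 ->
  fundamental_discriminant (- DE a4 a6 u v) ->
  (* (1) *)
  (squarefree_int v /\ gcdz u v = 1)
  /\
  (* (2) and (3) *)
  (forall x y : rat, on_curve a4 a6 x y ->
    exists A B C : int,
      [/\ gcdz A C = 1, gcdz B C = 1, 0 < C,
          x = A%:~R / (C%:~R) ^+ 2 & y = B%:~R / (C%:~R) ^+ 3] /\
      let a := A * v + C ^+ 2 * u in
      let g := gcdz C v in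
      (* the quotients C^3/g^2 and va/g^2 are integers *)
      [/\ (g ^+ 2 %| C ^+ 3)%Z, (g ^+ 2 %| v * a)%Z,
          (exists mu : int,
             ((C ^+ 3 %/ g ^+ 2)%Z * mu == 1 %[mod (v * a %/ g ^+ 2)%Z])%Z) &
          (forall mu : int,
             ((C ^+ 3 %/ g ^+ 2)%Z * mu == 1 %[mod (v * a %/ g ^+ 2)%Z])%Z ->
             let fa := (v * a %/ g ^+ 2)%Z in
             let fb := 2 * mu * (B * v ^+ 2 %/ g ^+ 2)%Z in
             let N := mu ^+ 2 * (B ^+ 2 * v ^+ 4 %/ g ^+ 4)%Z + dE a4 a6 u v in
             [/\ (g ^+ 2 %| B * v ^+ 2)%Z, (g ^+ 4 %| B ^+ 2 * v ^+ 4)%Z,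
                 (fa %| N)%Z,
                 pos_def_form fa fb (N %/ fa)%Z &
                 fb ^+ 2 - 4 * fa * (N %/ fa)%Z = - DE a4 a6 u v])]).
Proof.
move=> _ [hu hv h3 hD] _ hfd.
have hd : 0 < dE a4 a6 u v by move: hD; rewrite /DE; lra.
have [hsq hg] := (@part1b a4 a6 u v (@part1 a4 a6 u v hfd)).
split => // x y hxy.
have [A [B [C [[cAC cBC hC ex ey] hB]]]] := @ratdec a4 a6 x y hxy.
exists A, B, C; split; first by split => //; apply/eqP.
exact: (@core a4 a6 u v A B C hv hsq hd cAC hC hB
          (@apos a4 a6 u v A B C hu hv h3 hd hC hB)).
Qed.
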